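(* Fix any total budget $\mathrm{TB}\in\mathbb N_0$. If $G$ is a number game, then (for any budget state) both Left and Right optimally play $0$-bid strategies in $G$, i.e. bidding $0$ is optimal for each player at every follower of $G$.
   Context: Game forms are defined recursively: $G=\{G^{\mathcal L}\mid G^{\mathcal R}\}$ with finite sets of Left and Right options, and finite birthday. A follower of $G$ is a game form reachable from $G$ by a possibly empty sequence of moves. The budget set for total budget $\mathrm{TB}$ is $\mathcal B=\{0,\dots,\mathrm{TB},\hat 0,\dots,\widehat{\mathrm{TB}}\}$: state $p$ (resp. $\hat p$) means Left holds $p$ dollars and Right holds $\mathrm{TB}-p$, and Right (resp. Left) holds the tie-breaking marker. Play of $(G,\tilde p)$: at every position (terminal ones included) both players bid simultaneously, Left $\ell\in\{0,\dots,p\}$, Right $r\in\{0,\dots,\mathrm{TB}-p\}$. If Left holds the marker (state $\hat p$): if $\ell>r$ Left moves to $(G^L,\widehat{p-\ell})$, or, including the marker (allowed when $\ell\ge r$), to $(G^L,p-\ell)$; if $\ell=r$ Left wins, the marker passes to Right, play continues at $(G^L,p-\ell)$; if $\ell<r$ Right moves to $(G^R,\widehat{p+r})$. Symmetrically when Right holds the marker (state $p$): if $r>\ell$ Right moves to $(G^R,p+r)$ or, including the marker, to $(G^R,\widehat{p+r})$; if $r=\ell$ Right wins, the marker passes to Left, play continues at $(G^R,\widehat{p+r})$; if $r<\ell$ Left moves to $(G^L,p-\ell)$. A player who wins a bid but has no option loses. $o(G,\tilde p)\in\{\mathrm L,\mathrm R\}$ is the winner under optimal play. Disjunctive sum $G+H=\{G^{\mathcal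 L}+H,G+H^{\mathcal L}\mid G^{\mathcal R}+H,G+H^{\mathcal R}\}$. $G\ge H$ means $o(G+X,\tilde p)\ge o(H+X,\tilde p)$ for all game forms $X$ and all $\tilde p\in\mathcal B$ (with $\mathrm L>\mathrm R$); $G>H$ means $G\ge H$ and not $H\ge G$. A game form $G$ is a number if all its options are numbers and $G^L<G<G^R$ for all $G^L\in G^{\mathcal L}$, $G^R\in G^{\mathcal R}$. *)

(* Defs.v *)
From Stdlib Require Import List Arith Lia.
Import ListNotations.

(* Game forms: finite lists of Left and Right options; finite birthday is
   automatic since the type is inductive. *)
Inductive game : Type := Game : list game -> list game -> game.

Definition lopts (G : game) : list game := match G with Game l _ => l end.
Definition ropts (G : game) : list game := match G with Game _ r => r end.

Inductive follower : game -> game -> Prop :=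
| follower_refl G : follower G G
| follower_L G GL H : In GL (lopts G) -> follower H GL -> follower H G
| follower_R G GR H : In GR (ropts G) -> follower H GR -> follower H G.

(* Budget states: a pair (p, m) with p <= TB Left's dollars (Right holds TB - p);
   m = true  is the state  \hat p  (Left holds the tie-breaking marker),
   m = false is the state  p       (Right holds the tie-breaking marker). *)

(* Outcome of one bidding round at a position with Left options [ls], Right options
   [rs], state (p, m), Left bid [l], Right bid [r].  [f g p' m'] is the outcome
   (true = Left wins) of the continuation (g, (p', m')).
   The winner of the bid chooses an option (and, where allowed, the marker
   transfer); a bid winner without options loses (empty [existsb] = false for Left,
   empty [forallb] = true, i.e. Right loses). *)
Definition round (f : game -> nat -> bool -> bool) (ls rs : list game)
  (p : nat) (m : bool) (l r : nat) : bool :=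
  let Lmove p' ms := existsb (fun g => existsb (fun m' => f g p' m') ms) ls in
  let Rmove p' ms := forallb (fun g => forallb (fun m' => f g p' m') ms) rs in
  if m then
    if Nat.ltb r l then Lmove (p - l) [true; false]      (* l > r : keep or include marker *)
    else if Nat.eqb l r then Lmove (p - l) [false]       (* tie: Left wins, marker to Right *)
    else Rmove (p + r) [true]
  else
    if Nat.ltb l r then Rmove (p + r) [false; true]      (* r > l : keep or include marker *)
    else if Nat.eqb l r then Rmove (p + r) [true]        (* tie: Right wins, marker to Left *)
    else Lmove (p - l) [false].

(* [lwin TB G p m = true]  iff  o(G, state) = L, i.e. Left has a bid l in {0..p}
   such that for every Right bid r in {0..TB-p} Left wins after that round. *)
Fixpoint lwin (TB : nat) (G : game) (p : nat) (m : bool) {struct G} : bool :=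
  match G with
  | Game ls rs =>
      existsb (fun l => forallb (fun r => round (lwin TB) ls rs p m l r)
                                (seq 0 (S (TB - p))))
              (seq 0 (S p))
  end.

Inductive player : Type := Lp | Rp.
Definition outcome (TB : nat) (G : game) (p : nat) (m : bool) : player :=
  if lwin TB G p m then Lp else Rp.

(* Disjunctive sum  G + H = {G^L + H, G + H^L | G^R + H, G + H^R}. *)
Fixpoint gadd (G H : game) {struct G} : game :=
  match G with
  | Game gl gr =>
      let fix addG (H : game) : game :=
        match H with
        | Game hl hr =>
            Game (map (fun g => gadd g H) gl ++ map addG hl)
                 (map (fun g => gadd g H) gr ++ map addG hr)
        end in
      addG H
  end.

Definition ple (a b : player) : Prop :=
  match a, b with Lp, Rp => False | _, _ => True end.

Definition gge (TB : nat) (G H : game) : Prop :=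
  forall (X : game) (p : nat) (m : bool), p <= TB ->
    ple (outcome TB (gadd H X) p m) (outcome TB (gadd G X) p m).

Definition ggt (TB : nat) (G H : game) : Prop := gge TB G H /\ ~ gge TB H G.

Inductive is_number (TB : nat) : game -> Prop :=
| is_number_intro (ls rs : list game) :
    (forall GL, In GL ls -> is_number TB GL) ->
    (forall GR, In GR rs -> is_number TB GR) ->
    (forall GL, In GL ls -> ggt TB (Game ls rs) GL) ->
    (forall GR, In GR rs -> ggt TB GR (Game ls rs)) ->
    is_number TB (Game ls rs).

(* Main.v *)
Require Import Defs.
From Stdlib Require Import List Arith Lia Bool.
Import ListNotations.

Lemma existsb_ext_in {A} (f g : A -> bool) l :
  (forall x, In x l -> f x = g x) -> existsb f l = existsb g l.
Proof.
  induction l as [|a l IH]; simpl; intros H; auto.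
  rewrite H by auto. f_equal. apply IH; auto.
Qed.

Lemma forallb_ext_in {A} (f g : A -> bool) l :
  (forall x, In x l -> f x = g x) -> forallb f l = forallb g l.
Proof.
  induction l as [|a l IH]; simpl; intros H; auto.
  rewrite H by auto. f_equal. apply IH; auto.
Qed.

Lemma existsb_map' {A B} (f : B -> bool) (h : A -> B) l :
  existsb f (map h l) = existsb (fun x => f (h x)) l.
Proof. induction l; simpl; congruence. Qed.

Lemma forallb_map' {A B} (f : B -> bool) (h : A -> B) l :
  forallb f (map h l) = forallb (fun x => f (h x)) l.
Proof. induction l; simpl; congruence. Qed.

Lemma forallb_false {A} (f : A -> bool) l :
  forallb f l = false -> exists x, In x l /\ f x = false.
Proof.
  induction l as [|a l IH]; simpl; intros H; [discriminate|].
  destruct (f a) eqn:E; simpl in H.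
  - destruct (IH H) as [x [? ?]]; eauto.
  - eauto.
Qed.

Definition game_ind' (P : game -> Prop)
  (Hs : forall ls rs, (forall g, In g ls -> P g) -> (forall g, In g rs -> P g) ->
        P (Game ls rs)) : forall g, P g :=
  fix F g := match g with
  | Game ls rs => Hs ls rs
      ((fix FL (l : list game) : forall x, In x l -> P x :=
          match l with
          | [] => fun x (i : In x []) => match i with end
          | y :: t => fun x i => match i with
                      | or_introl e => eq_ind y P (F y) x e
                      | or_intror i' => FL t x i' end
          end) ls)
      ((fix FL (l : list game) : forall x, In x l -> P x :=
          match l with
          | [] => fun x (i : In x []) => match i with end
          | y :: t => fun x i => match i with
                      | or_introl e => eq_ind y P (F y) x e
                      | or_intror i' => FL t x i' end
          end) rs)
  end.

Lemma gadd_zero TB G : forall p m,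
  lwin TB (gadd G (Game [] [])) p m = lwin TB G p m.
Proof.
  induction G as [gl gr IHl IHr] using game_ind'.
  intros p m. cbn [gadd map]. rewrite !app_nil_r. cbn [lwin].
  apply existsb_ext_in; intros l _. apply forallb_ext_in; intros r _.
  unfold round. rewrite !existsb_map', !forallb_map'.
  destruct m; repeat match goal with |- context [if ?b then _ else _] => destruct b end;
  first [apply existsb_ext_in | apply forallb_ext_in]; intros g Hg; simpl;
  first [rewrite !(IHl g Hg) | rewrite !(IHr g Hg)]; reflexivity.
Qed.

Definition BI (TB : nat) (g : game) : Prop :=
  (forall q m, q <= TB -> lwin TB g q m = lwin TB g 0 m) /\
  (lwin TB g 0 true = true -> lwin TB g 0 false = true).

Lemma round_eq TB ls rs p m l r : p <= TB -> l <= p -> r <= TB - p ->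
  (forall g, In g ls -> BI TB g) -> (forall g, In g rs -> BI TB g) ->
  round (lwin TB) ls rs p m l r =
  if (if m then Nat.leb r l else Nat.ltb r l)
  then existsb (fun g => lwin TB g 0 false) ls
  else forallb (fun g => lwin TB g 0 true) rs.
Proof.
  intros hp hl hr BL BR. unfold round.
  destruct m; [destruct (Nat.ltb_spec r l); destruct (Nat.eqb_spec l r);
    destruct (Nat.leb_spec r l) | destruct (Nat.ltb_spec l r); destruct (Nat.eqb_spec l r);
    destruct (Nat.ltb_spec r l)]; try lia; cbv iota;
  first [apply existsb_ext_in; intros g Hg; destruct (BL g Hg) as [HB Himp]
        |apply forallb_ext_in; intros g Hg; destruct (BR g Hg) as [HB Himp]];
  simpl;
  first [rewrite (HB (p - l) true), (HB (p - l) false) by lia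
        |rewrite (HB (p - l) false) by lia
        |rewrite (HB (p + r) true), (HB (p + r) false) by lia
        |rewrite (HB (p + r) true) by lia];
  destruct (lwin TB g 0 true), (lwin TB g 0 false); simpl; auto; discriminate (Himp eq_refl).
Qed.

Lemma val TB ls rs p m : p <= TB ->
  (forall g, In g ls -> BI TB g) -> (forall g, In g rs -> BI TB g) ->
  lwin TB (Game ls rs) p m =
  let A := existsb (fun g => lwin TB g 0 false) ls in
  let B := forallb (fun g => lwin TB g 0 true) rs in
  if m then A && (B || Nat.leb (TB - p) p) else B || (A && Nat.ltb (TB - p) p).
Proof.
  intros hp BL BR. cbn [lwin].
  rewrite (existsb_ext_in _ (fun l => forallb (fun r =>
     if (if m then Nat.leb r l else Nat.ltb r l)
     then existsb (fun g => lwin TB g 0 false) ls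
     else forallb (fun g => lwin TB g 0 true) rs) (seq 0 (S (TB - p))))).
  2:{ intros l Hl; apply in_seq in Hl. apply forallb_ext_in; intros r Hr.
      apply in_seq in Hr. apply round_eq; auto; lia. }
  cbv zeta.
  destruct (existsb (fun g => lwin TB g 0 false) ls),
           (forallb (fun g => lwin TB g 0 true) rs), m; cbn [andb orb].
  - apply existsb_exists; exists 0; split; [apply in_seq; lia|].
    apply forallb_forall; intros; destruct (_ <=? _); auto.
  - apply existsb_exists; exists 0; split; [apply in_seq; lia|].
    apply forallb_forall; intros; destruct (_ <? _); auto.
  - destruct (Nat.leb_spec (TB - p) p).
    + apply existsb_exists; exists p; split; [apply in_seq; lia|].
      apply forallb_forall; intros r Hr; apply in_seq in Hr.
      destruct (Nat.leb_spec r p); auto; lia.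
    + apply not_true_iff_false; intro Hx; apply existsb_exists in Hx.
      destruct Hx as [l [Hl Hf]]; apply in_seq in Hl.
      rewrite forallb_forall in Hf. specialize (Hf (TB - p) ltac:(apply in_seq; lia)).
      destruct (Nat.leb_spec (TB - p) l); try discriminate; lia.
  - destruct (Nat.ltb_spec (TB - p) p).
    + apply existsb_exists; exists p; split; [apply in_seq; lia|].
      apply forallb_forall; intros r Hr; apply in_seq in Hr.
      destruct (Nat.ltb_spec r p); auto; lia.
    + apply not_true_iff_false; intro Hx; apply existsb_exists in Hx.
      destruct Hx as [l [Hl Hf]]; apply in_seq in Hl.
      rewrite forallb_forall in Hf. specialize (Hf l ltac:(apply in_seq; lia)).
      destruct (Nat.ltb_spec l l); try discriminate; lia.
  - apply not_true_iff_false; intro Hx; apply existsb_exists in Hx.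
    destruct Hx as [l [Hl Hf]]; apply in_seq in Hl.
    rewrite forallb_forall in Hf. specialize (Hf 0 ltac:(apply in_seq; lia)).
    destruct (Nat.leb_spec 0 l); try discriminate; lia.
  - apply existsb_exists; exists 0; split; [apply in_seq; lia|].
    apply forallb_forall; intros r Hr; destruct (Nat.ltb_spec r 0); auto; lia.
  - apply not_true_iff_false; intro Hx; apply existsb_exists in Hx.
    destruct Hx as [l [Hl Hf]]; apply in_seq in Hl.
    rewrite forallb_forall in Hf. specialize (Hf 0 ltac:(apply in_seq; lia)).
    destruct (Nat.leb_spec 0 l); try discriminate; lia.
  - apply not_true_iff_false; intro Hx; apply existsb_exists in Hx.
    destruct Hx as [l [Hl Hf]]; apply in_seq in Hl.
    rewrite forallb_forall in Hf. specialize (Hf 0 ltac:(apply in_seq; lia)).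
    destruct (0 <? l); try discriminate.
Qed.

Lemma noAB TB ls rs :
  (forall g, In g ls -> BI TB g) -> (forall g, In g rs -> BI TB g) ->
  (forall GR, In GR rs -> ggt TB GR (Game ls rs)) ->
  existsb (fun g => lwin TB g 0 false) ls = true ->
  forallb (fun g => lwin TB g 0 true) rs = false -> False.
Proof.
  intros BL BR Hgt HA HB.
  destruct (forallb_false _ _ HB) as [h [Hh Hf]].
  destruct (Hgt h Hh) as [Hge _].
  specialize (Hge (Game [] []) TB true (le_n _)).
  unfold outcome in Hge. rewrite !gadd_zero in Hge.
  rewrite (val TB ls rs TB true (le_n _) BL BR) in Hge. cbv zeta in Hge.
  rewrite HA, HB in Hge. rewrite Nat.sub_diag in Hge. simpl in Hge.
  destruct (BR h Hh) as [Hq _]. rewrite (Hq TB true (le_n _)), Hf in Hge.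
  exact Hge.
Qed.

Lemma number_BI TB G : is_number TB G -> BI TB G.
Proof.
  induction 1 as [ls rs NL BL NR BR GL GR].
  assert (Hn := noAB TB ls rs BL BR GR).
  split.
  - intros q m hq.
    rewrite (val TB ls rs q m hq BL BR), (val TB ls rs 0 m (Nat.le_0_l _) BL BR).
    cbv zeta.
    destruct (existsb (fun g => lwin TB g 0 false) ls),
           (forallb (fun g => lwin TB g 0 true) rs), m; cbn [andb orb];
      try reflexivity; exfalso; auto.
  - rewrite (val TB ls rs 0 true (Nat.le_0_l _) BL BR),
            (val TB ls rs 0 false (Nat.le_0_l _) BL BR).
    cbv zeta.
    destruct (existsb (fun g => lwin TB g 0 false) ls),
           (forallb (fun g => lwin TB g 0 true) rs); cbn [andb orb];
      auto; exfalso; auto.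
Qed.

Lemma follower_number TB H G : follower H G -> is_number TB G -> is_number TB H.
Proof.
  induction 1 as [G|G GL H Hin Hf IH|G GR H Hin Hf IH]; intros HG; auto;
  apply IH; destruct G as [ls rs]; inversion HG; subst; simpl in Hin; auto.
Qed.

Theorem mainTheorem5 (TB : nat) (G : game) :
  is_number TB G ->
  forall H : game, follower H G ->
  forall (p : nat) (m : bool), p <= TB ->
    (outcome TB H p m = Lp ->
       forall r, r <= TB - p -> round (lwin TB) (lopts H) (ropts H) p m 0 r = true) /\
    (outcome TB H p m = Rp ->
       forall l, l <= p -> round (lwin TB) (lopts H) (ropts H) p m l 0 = false).
Proof.
  intros HG H Hf p m hp.
  assert (HN := follower_number TB H G Hf HG).
  destruct H as [ls rs]. inversion HN as [ls' rs' NL NR GL GR]; subst.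
  assert (BL : forall g, In g ls -> BI TB g) by (intros; apply number_BI; auto).
  assert (BR : forall g, In g rs -> BI TB g) by (intros; apply number_BI; auto).
  assert (Hn := noAB TB ls rs BL BR GR).
  unfold outcome. rewrite (val TB ls rs p m hp BL BR). cbv zeta. simpl lopts; simpl ropts.
  split.
  - intros Hout r hr. rewrite round_eq by (auto; lia).
    destruct (existsb (fun g => lwin TB g 0 false) ls) eqn:EA,
           (forallb (fun g => lwin TB g 0 true) rs) eqn:EB, m; cbn [andb orb] in *;
      try discriminate; try (exfalso; auto; fail);
      repeat match goal with |- context [Nat.leb ?a ?b] => destruct (Nat.leb_spec a b)
                           | |- context [Nat.ltb ?a ?b] => destruct (Nat.ltb_spec a b) end;
      auto; lia.
  - intros Hout l hl. rewrite round_eq by (auto; lia).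
    destruct (existsb (fun g => lwin TB g 0 false) ls) eqn:EA,
           (forallb (fun g => lwin TB g 0 true) rs) eqn:EB, m; cbn [andb orb] in *;
      try discriminate; try (exfalso; auto; fail);
      repeat match goal with |- context [Nat.leb ?a ?b] => destruct (Nat.leb_spec a b)
                           | |- context [Nat.ltb ?a ?b] => destruct (Nat.ltb_spec a b) end;
      auto; lia.
Qed.
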